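(* Let $p$ be a prime and let $L$ be a finitely generated pro-$p$ group. Suppose that $M$ is an abelian normal subgroup of $L$ equal to the normal closure $M=\langle T^L\rangle$ of a finite set $T$ consisting of right Engel elements of $L$, and that $L/M$ is nilpotent. Then $L$ is nilpotent.
   Context: An element $g$ of a group $L$ is right Engel if for every $x\in L$ there is $n=n(g,x)$ with $[g,{}_nx]=1$, where $[y,{}_0x]=y$ and $[y,{}_{i+1}x]=[[y,{}_ix],x]$. Subgroups, normal closures and generation are in the topological (closed) sense. *)

(* Defs.v *)
From mathcomp Require Import all_boot all_order all_algebra.
From mathcomp Require Import all_classical all_reals all_analysis.

Set Implicit Arguments.
Unset Strict Implicit.
Unset Printing Implicit Defensive.

Local Open Scope classical_set_scope.

Section Groups.
Variables (T : Type) (mul : T -> T -> T) (inv : T -> T) (one : T).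

Definition is_group : Prop :=
  [/\ forall x y z, mul x (mul y z) = mul (mul x y) z,
      forall x, mul one x = x,
      forall x, mul x one = x,
      forall x, mul (inv x) x = one &
      forall x, mul x (inv x) = one].

Definition subgroup (H : set T) : Prop :=
  [/\ H one, forall x y, H x -> H y -> H (mul x y) & forall x, H x -> H (inv x)].

Definition normal_subgroup (H : set T) : Prop :=
  subgroup H /\ forall x g, H x -> H (mul (inv g) (mul x g)).

Definition comm (a b : T) : T := mul (mul (inv a) (inv b)) (mul a b).

Definition engel_comm (g x : T) (n : nat) : T := iter n (fun y => comm y x) g.

Definition right_engel (g : T) : Prop :=
  forall x, exists n, engel_comm g x n = one.

Definition gen (S : set T) : set T :=
  fun x => forall H, subgroup H -> S `<=` H -> H x.

Definition comm_set (A : set T) : set T :=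
  gen [set c | exists a x, A a /\ c = comm a x].

Fixpoint lcs (i : nat) : set T :=
  if i is i'.+1 then comm_set (lcs i') else setT.

(* L/M is nilpotent (M a normal subgroup): some term of the lower central
   series of L lies in M *)
Definition nilpotent_mod (M : set T) : Prop := exists c, lcs c `<=` M.

Definition nilpotent : Prop := nilpotent_mod [set one].

Definition abelian_set (A : set T) : Prop :=
  forall x y, A x -> A y -> mul x y = mul y x.

Definition has_index (H : set T) (k : nat) : Prop :=
  exists r : 'I_k -> T,
    (forall x, exists i, H (mul (inv (r i)) x)) /\
    (forall x i j, H (mul (inv (r i)) x) -> H (mul (inv (r j)) x) -> i = j).

End Groups.

Section TopGroups.
Variables (T : topologicalType) (mul : T -> T -> T) (inv : T -> T) (one : T).

Definition topological_group : Prop :=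
  [/\ is_group mul inv one,
      continuous (fun xy : T * T => mul xy.1 xy.2) &
      continuous inv].

Definition profinite : Prop :=
  [/\ topological_group, compact [set: T], hausdorff_space T &
      totally_disconnected [set: T]].

Definition pro_p (p : nat) : Prop :=
  profinite /\
  forall N : set T, open N -> normal_subgroup mul inv one N ->
    exists k, has_index mul inv N (p ^ k).

Definition topgen (S : set T) : set T :=
  fun x => forall H, closed H -> subgroup mul inv one H -> S `<=` H -> H x.

Definition topncl (S : set T) : set T :=
  fun x => forall H, closed H -> normal_subgroup mul inv one H -> S `<=` H -> H x.

Definition topologically_finitely_generated : Prop :=
  exists S : set T, finite_set S /\ topgen S = setT.

End TopGroups.

(* Main.v *)
Require Import Defs.
From mathcomp Require Import all_boot all_order all_algebra.
From mathcomp Require Import all_classical all_reals all_analysis.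
Local Open Scope classical_set_scope.
Set Implicit Arguments. Unset Strict Implicit.

Section Grp.
Variables (T : topologicalType) (mul : T -> T -> T) (inv : T -> T) (one : T).
Hypothesis Hg : is_group mul inv one.
Local Infix "*" := mul.

Lemma mulA x y z : x * (y * z) = (x * y) * z. Proof. by case: Hg. Qed.
Lemma mulAr x y z : (x * y) * z = x * (y * z). Proof. by rewrite mulA. Qed.
Lemma mul1g x : one * x = x. Proof. by case: Hg. Qed.
Lemma mulg1 x : x * one = x. Proof. by case: Hg. Qed.
Lemma mulVg x : inv x * x = one. Proof. by case: Hg. Qed.
Lemma mulgV x : x * inv x = one. Proof. by case: Hg. Qed.
Lemma mulKg x y : inv x * (x * y) = y. Proof. by rewrite mulA mulVg mul1g. Qed.
Lemma mulKVg x y : x * (inv x * y) = y. Proof. by rewrite mulA mulgV mul1g. Qed.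
Lemma inv_uniq x y : x * y = one -> inv x = y.
Proof. by move=> h; rewrite -[inv x]mulg1 -h mulKg. Qed.
Lemma invK x : inv (inv x) = x. Proof. by apply: inv_uniq; rewrite mulVg. Qed.
Lemma invM x y : inv (x * y) = inv y * inv x.
Proof. by apply: inv_uniq; rewrite mulAr mulKVg mulgV. Qed.
Lemma inv1 : inv one = one. Proof. by apply: inv_uniq; rewrite mul1g. Qed.
Lemma mulgK x y : x * y * inv y = x. Proof. by rewrite mulAr mulgV mulg1. Qed.

Ltac gsimpl := repeat (rewrite ?mulAr ?invM ?invK ?inv1 ?mul1g ?mulg1 ?mulVg ?mulgV ?mulKg ?mulKVg).

Definition cj x g := inv g * (x * g).
Notation cm := (comm mul inv).

Lemma commE a b : cm a b = inv a * cj a b.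
Proof. rewrite /comm /cj; gsimpl; done. Qed.
Lemma comm_mul_l x y z : cm (x * y) z = cj (cm x z) y * cm y z.
Proof. rewrite /comm /cj; gsimpl; done. Qed.
Lemma comm_inv_l x y : cm (inv x) y = inv (cj (cm x y) (inv x)).
Proof. rewrite /comm /cj; gsimpl; done. Qed.
Lemma comm_cj x g y : cm (cj x g) y = cj (cm x (cj y (inv g))) g.
Proof. rewrite /comm /cj; gsimpl; done. Qed.
Lemma comm_mul_r x y z : cm x (y * z) = cm x z * cj (cm x y) z.
Proof. rewrite /comm /cj; gsimpl; done. Qed.
Lemma comm_inv_r x y : cm x (inv y) = inv (cj (cm x y) (inv y)).
Proof. rewrite /comm /cj; gsimpl; done. Qed.
Lemma comm_r_cj m x g : cm m (cj x g) = cj (cm (cj m (inv g)) x) g.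
Proof. rewrite /comm /cj; gsimpl; done. Qed.
Lemma comm1g y : cm one y = one.
Proof. rewrite /comm; gsimpl; done. Qed.
Lemma cj_comm f h : cj f h = f * cm f h.
Proof. rewrite /comm /cj; gsimpl; done. Qed.
Lemma swap_id m f x : cm (cm m f) x = inv (cj m f) * (m * (inv (cj m x) * cj m (f * x))).
Proof. rewrite /comm /cj; gsimpl; done. Qed.
Lemma cjD m f x : cj m (f * x) = cj m (x * f) * cm (cj m (x * f)) (cm f x).
Proof. rewrite /comm /cj; gsimpl; done. Qed.

Hypothesis Hmc : continuous (fun xy : (T * T)%type => mul xy.1 xy.2).
Hypothesis Hic : continuous inv.

Lemma contM (f g : T -> T) : continuous f -> continuous g -> continuous (fun x => f x * g x).
Proof.
move=> cf cg x.
have hp : {for x, continuous (fun x => (f x, g x))}.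
  have := cvg_pair (cf x) (cg x). by move=> H; exact: H.
have := continuous_comp hp (@Hmc (f x, g x)). by [].
Qed.
Lemma contV (f : T -> T) : continuous f -> continuous (fun x => inv (f x)).
Proof. move=> cf x; exact: (continuous_comp (cf x) (@Hic (f x))). Qed.
Lemma cont_id : continuous (fun x : T => x). Proof. by move=> x. Qed.
Lemma cont_cst (a : T) : continuous (fun _ : T => a). Proof. exact: cst_continuous. Qed.

Lemma cont_comm_l y : continuous (fun x => cm x y).
Proof. rewrite /comm; apply: contM; apply: contM; (apply: contV || idtac); (exact: cont_id || exact: cont_cst). Qed.
Lemma cont_comm_r x : continuous (fun y => cm x y).
Proof. rewrite /comm; apply: contM; apply: contM; (apply: contV || idtac); (exact: cont_id || exact: cont_cst). Qed.

Lemma closed_pre (f : T -> T) (A : set T) : continuous f -> closed A -> closed (f @^-1` A).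
Proof. by move=> cf cA; apply: (proj1 (continuous_closedP f)). Qed.

Definition nsg H := normal_subgroup mul inv one H.
Definition sg H := subgroup mul inv one H.

Lemma nsg_sg H : nsg H -> sg H. Proof. by case. Qed.
Lemma sg1 H : sg H -> H one. Proof. by case. Qed.
Lemma sgM H x y : sg H -> H x -> H y -> H (x * y). Proof. by case=> _ h _; apply: h. Qed.
Lemma sgV H x : sg H -> H x -> H (inv x). Proof. by case=> _ _ h; apply: h. Qed.
Lemma nsgJ H x g : nsg H -> H x -> H (cj x g). Proof. by case=> _ h; apply: h. Qed.
Lemma nsg_comm_l H x y : nsg H -> H x -> H (cm x y).
Proof. move=> hH hx; rewrite commE; apply: sgM (nsg_sg hH) _ _; [exact: sgV (nsg_sg hH) hx| exact: nsgJ]. Qed.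
Lemma nsg_comm_r H x y : nsg H -> H x -> H (cm y x).
Proof.
move=> hH hx; have -> : cm y x = cj (inv x) y * x by rewrite /comm /cj; gsimpl.
apply: (sgM (nsg_sg hH) _ hx). apply: (nsgJ _ hH). exact: (sgV (nsg_sg hH) hx).
Qed.
Lemma nsg_ec H x y n : nsg H -> H x -> H (engel_comm mul inv x y n).
Proof. move=> hH hx; elim: n => [//|n IH] /=; exact: nsg_comm_l IH. Qed.

Lemma topncl_closed A : closed (topncl mul inv one A).
Proof.
have -> : topncl mul inv one A = \bigcap_(H in [set H | closed H /\ nsg H /\ A `<=` H]) H.
  apply/seteqP; split=> x /=.
  - by move=> h H [c [n s]]; apply: h.
  - by move=> h H c n s; apply: h.
by apply: closed_bigI => H [].
Qed.
Lemma topncl_nsg A : nsg (topncl mul inv one A).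
Proof.
split; first split.
- by move=> H _ hH _; apply: sg1 (nsg_sg hH).
- by move=> x y hx hy H c hH s; apply: sgM (nsg_sg hH) (hx H c hH s) (hy H c hH s).
- by move=> x hx H c hH s; apply: sgV (nsg_sg hH) (hx H c hH s).
- by move=> x g hx H c hH s; apply: (nsgJ _ hH (hx H c hH s)).
Qed.
Lemma topncl_sub A : A `<=` topncl mul inv one A.
Proof. by move=> x hx H _ _ s; apply: s. Qed.
Lemma topncl_min A H : closed H -> nsg H -> A `<=` H -> topncl mul inv one A `<=` H.
Proof. by move=> c n s x hx; apply: hx. Qed.
Lemma topncl_mono A B : A `<=` B -> topncl mul inv one A `<=` topncl mul inv one B.
Proof.
move=> AB; apply: topncl_min; [exact: topncl_closed|exact: topncl_nsg|].
by move=> x /AB; apply: topncl_sub.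
Qed.

Fixpoint zeta (A : set T) (k : nat) : set T :=
  if k is k'.+1 then [set x | forall y, zeta A k' (cm x y)] else A.

Lemma zeta_nsg A k : nsg A -> nsg (zeta A k).
Proof.
move=> hA; elim: k => [//|k IH] /=.
split; first split.
- by move=> y; rewrite comm1g; apply: sg1 (nsg_sg IH).
- move=> x1 x2 h1 h2 y; rewrite comm_mul_l; apply: sgM (nsg_sg IH) _ (h2 y).
  exact: nsgJ IH (h1 y).
- move=> x h y; rewrite comm_inv_l; apply: sgV (nsg_sg IH) _; exact: nsgJ IH (h y).
- move=> x g h y; rewrite comm_cj; exact: nsgJ IH (h _).
Qed.

Lemma zeta_closed A k : closed A -> closed (zeta A k).
Proof.
move=> cA; elim: k => [//|k IH] /=.
have -> : [set x | forall y, zeta A k (cm x y)] = \bigcap_(y in setT) ((fun x => cm x y) @^-1` zeta A k).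
  by apply/seteqP; split=> x /= h y; [move=> _|]; apply: h.
apply: closed_bigI => y _; apply: closed_pre IH; exact: cont_comm_l.
Qed.

Lemma zeta_mono A B k : A `<=` B -> zeta A k `<=` zeta B k.
Proof. by move=> AB; elim: k => [//|k IH] /= x h y; apply: IH. Qed.

Lemma zeta_add A a b : zeta (zeta A b) a `<=` zeta A (a + b).
Proof. by elim: a => [//|a IH] x /= h y; apply: IH. Qed.

Lemma lcs_zeta A : nsg A -> forall j i, lcs mul inv one i `<=` zeta A j -> lcs mul inv one (i + j) `<=` A.
Proof.
move=> hA; elim=> [|j IH] i h; first by rewrite addn0.
rewrite -addSnnS; apply: IH => x /= hx.
apply: hx; first exact: nsg_sg (zeta_nsg j hA).
by move=> c [a [y [ha ->]]]; apply: (h a ha).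
Qed.

Lemma commg1 u : cm u one = one. Proof. rewrite /comm; gsimpl; done. Qed.

Section Gen.
Variable S : set T.
Hypothesis hS : topgen mul inv one S = setT.

Lemma topgen_all H : closed H -> sg H -> S `<=` H -> forall x, H x.
Proof. move=> c s sub x; have : topgen mul inv one S x by rewrite hS. by apply. Qed.

Lemma gen_lcs A c : closed A -> nsg A ->
  (forall s, S s -> forall l : seq T, size l = c -> (forall y, y \in l -> S y) -> A (foldl cm s l)) ->
  lcs mul inv one c `<=` A.
Proof.
move=> cA nA h.
have key : forall k u, (forall l : seq T, size l = k -> (forall y, y \in l -> S y) -> A (foldl cm u l)) -> zeta A k u.
  elim=> [|k IH] u hu /=; first by apply: (hu [::]).
  apply: topgen_all.
  - apply: closed_pre; [exact: cont_comm_r | exact: zeta_closed].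
  - split.
    + by rewrite /= commg1; apply: sg1 (nsg_sg (zeta_nsg k nA)).
    + move=> y z hy hz /=; rewrite comm_mul_r; apply: sgM (nsg_sg (zeta_nsg k nA)) hz _.
      exact: nsgJ (zeta_nsg k nA) hy.
    + move=> y hy /=; rewrite comm_inv_r; apply: sgV (nsg_sg (zeta_nsg k nA)) _.
      exact: nsgJ (zeta_nsg k nA) hy.
  - move=> s hs /=; apply: IH => l hl hl'.
    apply: (hu (s :: l)); first by rewrite /= hl.
    by move=> y; rewrite inE => /orP [/eqP -> //|]; apply: hl'.
have all : forall x, zeta A c x.
  apply: topgen_all; [exact: zeta_closed | exact: nsg_sg (zeta_nsg c nA) |].
  by move=> s hs; apply: key => l hl hl'; apply: h.
have := @lcs_zeta A nA c 0; rewrite add0n; apply => x _; exact: all.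
Qed.
End Gen.

Definition Cen (N K : set T) := [set x | forall m, N m -> K (cm m x)].

Lemma Cen_closed N K : closed K -> closed (Cen N K).
Proof.
move=> cK.
have -> : Cen N K = \bigcap_(m in N) ((fun x => cm m x) @^-1` K).
  by apply/seteqP; split=> x /= h m hm; apply: h.
apply: closed_bigI => m _; apply: closed_pre cK; exact: cont_comm_r.
Qed.

Lemma Cen_nsg N K : nsg N -> nsg K -> nsg (Cen N K).
Proof.
move=> nN nK; split; first split.
- by move=> m _; rewrite commg1; apply: sg1 (nsg_sg nK).
- move=> y z hy hz m hm; rewrite comm_mul_r; apply: sgM (nsg_sg nK) (hz m hm) _.
  exact: nsgJ nK (hy m hm).
- move=> y hy m hm; rewrite comm_inv_r; apply: sgV (nsg_sg nK) _; exact: nsgJ nK (hy m hm).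
- move=> y g hy m hm; rewrite comm_r_cj; apply: nsgJ nK _; apply: hy; exact: nsgJ nN hm.
Qed.

Lemma Cen_mono N N' K K' : N' `<=` N -> K `<=` K' -> Cen N K `<=` Cen N' K'.
Proof. by move=> h1 h2 x hx m hm; apply/h2/hx/h1. Qed.

Lemma lcs_comm i a y : lcs mul inv one i a -> lcs mul inv one i.+1 (cm a y).
Proof. by move=> ha H hH s; apply: s; exists a, y. Qed.

Lemma lcs_foldl l : forall i s, lcs mul inv one i s -> lcs mul inv one (i + size l) (foldl cm s l).
Proof.
elim: l => [|y l IH] i s hs /=; first by rewrite addn0.
rewrite addnS -addSn; apply: IH; exact: lcs_comm.
Qed.

Notation ec := (engel_comm mul inv).

Section Abel.
Variable M : set T.
Hypothesis nM : nsg M.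
Hypothesis aM : abelian_set mul M.

Lemma comm_hom a b y : M a -> M b -> cm (a * b) y = cm a y * cm b y.
Proof.
move=> ha hb; rewrite comm_mul_l; congr (_ * _).
rewrite /cj (aM (nsg_comm_l y nM ha) hb); exact: mulKg.
Qed.

Lemma comm_homV a y : M a -> cm (inv a) y = inv (cm a y).
Proof.
move=> ha; have := comm_hom y (sgV (nsg_sg nM) ha) ha.
rewrite mulVg comm1g => h.
by rewrite -(invK (cm (inv a) y)); congr inv; apply: inv_uniq; rewrite -h.
Qed.

Section K.
Variable K : set T.
Hypothesis nK : nsg K.
Definition eqm a b := K (inv a * b).

Lemma eqm_refl a : eqm a a. Proof. by rewrite /eqm mulVg; apply: sg1 (nsg_sg nK). Qed.
Lemma eqm_trans a b c : eqm a b -> eqm b c -> eqm a c.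
Proof.
move=> h1 h2; have := sgM (nsg_sg nK) h1 h2.
by rewrite /eqm (_ : inv a * b * (inv b * c) = inv a * c) //; gsimpl.
Qed.
Lemma eqm_K a b : eqm a b -> K b -> K a.
Proof.
move=> h hb; have := sgM (nsg_sg nK) hb (sgV (nsg_sg nK) h).
by rewrite (_ : b * inv (inv a * b) = a) //; gsimpl.
Qed.
Lemma eqm_resp a b y : M a -> M b -> eqm a b -> eqm (cm a y) (cm b y).
Proof.
move=> ha hb h; rewrite /eqm -comm_homV // -comm_hom //; last exact: sgV (nsg_sg nM) ha.
exact: nsg_comm_l.
Qed.

Section ET.
Variable N : set T.
Hypothesis nN : nsg N.
Hypothesis NM : N `<=` M.
Variables f x : T.
Hypothesis hfx : forall u, N u -> K (cm u (cm f x)).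

Lemma swapK m : N m -> eqm (cm (cm m f) x) (cm (cm m x) f).
Proof.
move=> hm.
rewrite (swap_id m f x) (swap_id m x f) (cjD m f x).
have hA : M (cj m f) := NM (nsgJ f nN hm).
have hB : M (cj m x) := NM (nsgJ x nN hm).
have hmM : M m by apply/NM.
have hE : K (cm (cj m (x * f)) (cm f x)) := hfx (nsgJ (x * f) nN hm).
move: hA hB hE; set A := cj m f; set B := cj m x; set D := cj m (x * f).
set E := cm D (cm f x); clearbody A B D E => hA hB hE.
have hVA := sgV (nsg_sg nM) hA; have hVB := sgV (nsg_sg nM) hB.
have hX : inv A * (m * inv B) = inv B * (m * inv A).
  rewrite (aM hVA (sgM (nsg_sg nM) hmM hVB)) mulAr (aM hVB hVA).
  by rewrite (aM hVB (sgM (nsg_sg nM) hmM hVA)) mulAr.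
have eq1 : inv A * (m * (inv B * (D * E))) = (inv B * (m * inv A)) * (D * E).
  by rewrite -hX; gsimpl.
rewrite /eqm eq1.
suff -> : inv (inv B * (m * inv A) * (D * E)) * (inv B * (m * (inv A * D))) = inv E.
  exact: sgV (nsg_sg nK) hE.
by gsimpl.
Qed.

Lemma step1 j m : N m -> eqm (cm (ec m f j) x) (ec (cm m x) f j).
Proof.
elim: j m => [|j IH] m hm; first exact: eqm_refl.
have h1 : N (ec m f j) := nsg_ec f j nN hm.
have h2 : N (cm m x) := nsg_comm_l x nN hm.
rewrite /=; apply: eqm_trans (swapK h1) _.
apply: eqm_resp.
- exact: NM (nsg_comm_l x nN h1).
- exact: NM (nsg_ec f j nN h2).
- exact: IH.
Qed.

Lemma step2 j r m : N m -> eqm (ec (ec m f j) x r) (ec (ec m x r) f j).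
Proof.
elim: r m => [|r IH] m hm; first exact: eqm_refl.
have h1 : N (ec m x r) := nsg_ec x r nN hm.
rewrite /=; apply: eqm_trans (eqm_resp _ _ _ (IH m hm)) _.
- exact: NM (nsg_ec x r nN (nsg_ec f j nN hm)).
- exact: NM (nsg_ec f j nN h1).
- exact: step1 h1.
Qed.

Lemma ET j r m : N m -> K (ec m x r) -> K (ec (ec m f j) x r).
Proof. move=> hm hK; apply: eqm_K (step2 j r hm) _; exact: nsg_ec. Qed.
End ET.
End K.
End Abel.

Lemma engel_mono K g x n m : nsg K -> K (ec g x n) -> n <= m -> K (ec g x m).
Proof.
move=> nK h; elim: m => [|m IH]; first by rewrite leqn0 => /eqP <-.
rewrite leq_eqVlt => /orP [/eqP <- //|]; rewrite ltnS => /IH /= hm.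
exact: nsg_comm_l.
Qed.

Definition Engel (G : seq T) (K : set T) := forall g, g \in G -> forall x, exists n, K (ec g x n).

Lemma engel_unif K G f : nsg K -> Engel G K -> exists n, forall g, g \in G -> K (ec g f n).
Proof.
move=> nK; elim: G => [|g G IH] hE; first by exists 0.
have [n1 h1] := hE g (mem_head _ _) f.
have [n2 h2] : exists n, forall g, g \in G -> K (ec g f n).
  by apply: IH => g' hg'; apply: hE; rewrite inE hg' orbT.
exists (maxn n1 n2) => g'; rewrite inE => /orP [/eqP -> |hg'].
- exact: (engel_mono nK h1 (leq_maxl _ _)).
- exact: (engel_mono nK (h2 _ hg') (leq_maxr _ _)).
Qed.

Definition NN (G : seq T) (K : set T) := topncl mul inv one ([set` G] `|` K).

Section Main.
Variable M : set T.
Hypothesis cM : closed M.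
Hypothesis nM : nsg M.
Hypothesis aM : abelian_set mul M.
Variable S : set T.
Hypothesis hS : topgen mul inv one S = setT.
Variable sS : seq T.
Hypothesis hsS : S = [set` sS].

Definition P c := forall K (G : seq T), closed K -> nsg K -> K `<=` M -> (forall g, g \in G -> M g) ->
  Engel G K -> lcs mul inv one c `<=` Cen (NN G K) K -> exists k, NN G K `<=` zeta K k.

Definition Q c (l : seq T) := forall K (G : seq T), closed K -> nsg K -> K `<=` M -> (forall g, g \in G -> M g) ->
  Engel G K -> lcs mul inv one c.+1 `<=` Cen (NN G K) K ->
  (forall f, f \in l -> Cen (NN G K) K f) -> exists k, NN G K `<=` zeta K k.

Lemma NN_M G K : K `<=` M -> (forall g, g \in G -> M g) -> NN G K `<=` M.
Proof. by move=> KM GM; apply: (topncl_min cM nM) => y [/GM|/KM]. Qed.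

Lemma P0 : P 0.
Proof.
move=> K G _ _ _ _ _ h; exists 1 => m hm y /=; exact: (h y I m hm).
Qed.

Fixpoint words n : seq (seq T) :=
  if n is n'.+1 then [seq y :: w | y <- sS, w <- words n'] else [:: [::]].

Lemma words_mem n l : size l = n -> (forall y, y \in l -> y \in sS) -> l \in words n.
Proof.
elim: n l => [|n IH] [|y l] //=.
move=> [hl] hy; apply: (allpairs_f (fun y w => y :: w)).
- by apply: hy; rewrite inE eqxx.
- by apply: IH => // z hz; apply: hy; rewrite inE hz orbT.
Qed.

Lemma words_size n l : l \in words n -> size l = n.
Proof.
elim: n l => [|n IH] l /=; first by rewrite inE => /eqP ->.
by case/allpairsP => [[y w] [_ hw ->]] /=; rewrite (IH _ hw).
Qed.

Definition Fc c := [seq foldl cm s l | s <- sS, l <- words c].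

Lemma Fc_lcs c f : f \in Fc c -> lcs mul inv one c f.
Proof.
case/allpairsP => [[s l] [_ hl ->]] /=.
have := @lcs_foldl l 0 s I; by rewrite add0n (words_size hl).
Qed.

Lemma QF c : P c -> Q c (Fc c).
Proof.
move=> hP K G cK nK KM GM hE hC hF; apply: hP => //.
apply: (gen_lcs hS); [exact: Cen_closed | exact: Cen_nsg ((@topncl_nsg _)) nK |].
move=> s hs l hl hl'; apply: hF; apply: (allpairs_f (fun s l => foldl cm s l)).
- by move: hs; rewrite hsS.
- by apply: words_mem => // y /hl'; rewrite hsS.
Qed.

Lemma Qstep c f l : lcs mul inv one c f -> Q c (f :: l) -> Q c l.
Proof.
move=> hf hQ K G cK nK KM GM hE hC hl.
set N := NN G K.
have cN : closed N := (@topncl_closed _).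
have nN : nsg N := (@topncl_nsg _).
have NM : N `<=` M := NN_M KM GM.
have KN : K `<=` N by move=> y hy; apply: topncl_sub; right.
have GN : forall g, g \in G -> N g by move=> g hg; apply: topncl_sub; left.
have [n hn] := engel_unif f nK hE.
pose Gj j := [seq ec g f j | g <- G].
pose Nj j := NN (Gj j) K.
have cNj j : closed (Nj j) := (@topncl_closed _).
have nNj j : nsg (Nj j) := (@topncl_nsg _).
have GjN j : forall y, y \in Gj j -> N y.
  by move=> y /mapP [g hg ->]; apply: (nsg_ec f j nN (GN g hg)).
have NjN j : Nj j `<=` N.
  by apply: (topncl_min cN nN) => y [/GjN|/KN].
have NjM j : Nj j `<=` M by move=> y /NjN /NM.
have KNj j : K `<=` Nj j by move=> y hy; apply: topncl_sub; right.
have GjNj j : forall y, y \in Gj j -> Nj j y by move=> y hy; apply: topncl_sub; left.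
have Njbig j : n <= j -> Nj j `<=` K.
  move=> hj; apply: (topncl_min cK nK) => y [/mapP [g hg ->]|//].
  exact: (engel_mono nK (hn g hg) hj).
have hfx : forall x u, N u -> K (cm u (cm f x)).
  by move=> x u hu; apply: (hC _ (lcs_comm x hf)).
have key : forall d j, n <= j + d -> exists k, Nj j `<=` zeta K k.
  elim=> [|d IH] j hj.
    by exists 0; apply: Njbig; rewrite addn0 in hj.
  have [k1 hk1] : exists k, Nj j.+1 `<=` zeta K k by apply: IH; rewrite addSnnS.
  set K' := Nj j.+1.
  set N' := NN (Gj j) K'.
  have N'N : N' `<=` N by apply: (topncl_min cN nN) => y [/GjN|/NjN].
  have hZ : Cen N' K' f.
    pose Z := N `&` ((fun m => cm m f) @^-1` K').
    have cZ : closed Z.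
      have h2 := closed_pre (@cont_comm_l f) (cNj j.+1).
      exact: (@closedI T _ _ cN h2).
    have nK' : nsg K' := nNj _.
    have nZ : nsg Z.
      split; first split.
      - by split; [exact: sg1 (nsg_sg nN) | rewrite /= comm1g; exact: sg1 (nsg_sg nK')].
      - move=> a b [ha ha'] [hb hb']; split; first exact: (sgM (nsg_sg nN) ha hb).
        rewrite /= comm_mul_l; apply: (sgM (nsg_sg nK') _ hb'); exact: (nsgJ _ nK' ha').
      - move=> a [ha ha']; split; first exact: (sgV (nsg_sg nN) ha).
        rewrite /= comm_inv_l; apply: (sgV (nsg_sg nK') _); exact: (nsgJ _ nK' ha').
      - move=> a g [ha ha']; split; first exact: (nsgJ _ nN ha).
        rewrite /= comm_cj; apply: (nsgJ _ nK' _).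
        rewrite cj_comm comm_mul_r; apply: (sgM (nsg_sg nK') _ _).
        + apply: KNj; apply: (hC _ (lcs_comm (inv g) hf) a ha).
        + exact: (nsgJ _ nK' ha').
    have N'Z : N' `<=` Z.
      apply: (topncl_min cZ nZ) => y [hy|hy].
      - split; first exact: GjN hy.
        move: hy => /mapP [g hg ->] /=.
        by apply: GjNj; apply/mapP; exists g.
      - split; first exact: NjN hy.
        exact: (nsg_comm_l _ nK' hy).
    by move=> m /N'Z [].
  have hE' : Engel (Gj j) K'.
    move=> y /mapP [g hg ->] x.
    have [r hr] := hE g hg x.
    exists r; apply: KNj; exact: (ET nM aM nK nN NM (hfx x) j (GN g hg) hr).
  have hC' : lcs mul inv one c.+1 `<=` Cen N' K'.
    by move=> y hy; apply: (Cen_mono N'N (KNj _) (hC y hy)).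
  have hl' : forall f', f' \in f :: l -> Cen N' K' f'.
    move=> f'; rewrite inE => /orP [/eqP -> //|hf'].
    exact: (Cen_mono N'N (KNj _) (hl f' hf')).
  have [k2 hk2] := hQ K' (Gj j) (cNj _) (nNj _) (NjM _) (fun y hy => NM _ (GjN _ _ hy)) hE' hC' hl'.
  exists (k2 + k1) => y hy; apply: zeta_add; apply: (zeta_mono hk1); apply: hk2.
  move: hy; apply: topncl_mono => z [hz|hz]; [by left| by right; apply: KNj].
have [k hk] : exists k, Nj 0 `<=` zeta K k by apply: (key n 0); rewrite add0n.
exists k => y hy; apply: hk; move: hy; apply: topncl_mono => z [hz|hz]; [left|by right].
by apply/mapP; exists z.
Qed.

Lemma Qnil c l : (forall f, f \in l -> lcs mul inv one c f) -> Q c l -> Q c [::].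
Proof.
elim: l => [//|f l IH] hl hQ; apply: IH.
- by move=> f' hf'; apply: hl; rewrite inE hf' orbT.
- by apply: (Qstep (hl f (mem_head _ _)) hQ).
Qed.

Lemma Psucc c : P c -> P c.+1.
Proof.
move=> hP K G cK nK KM GM hE hC.
apply: (Qnil (@Fc_lcs c) (QF hP)) => //.
Qed.

Lemma Pall c : P c.
Proof. elim: c => [|c IH]; [exact: P0 | exact: Psucc]. Qed.
End Main.

Lemma comm_commute x y : x * y = y * x -> cm x y = one.
Proof. move=> h; rewrite /comm h; gsimpl; done. Qed.

Lemma nsg1 : nsg [set one].
Proof.
split; first split.
- by [].
- by move=> x y -> ->; rewrite mul1g.
- by move=> x ->; rewrite inv1.
- by move=> x g ->; rewrite mul1g mulVg.
Qed.
End Grp.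

Unset Implicit Arguments.

Theorem lemma3p3 (p : nat) (T : topologicalType)
    (mul : T -> T -> T) (inv : T -> T) (one : T) (Tset : set T) :
  prime p ->
  pro_p mul inv one p ->
  topologically_finitely_generated mul inv one ->
  finite_set Tset ->
  (forall g, Tset g -> right_engel mul inv one g) ->
  abelian_set mul (topncl mul inv one Tset) ->
  nilpotent_mod mul inv one (topncl mul inv one Tset) ->
  nilpotent mul inv one.
Proof.
move=> _ [[[Hg Hmc Hic] _ Hhaus _] _] [S [finS hS]] finT hEng habel [c hc].
have [sS hsS] := (finite_seqP S).1 finS.
have [tS htS] := (finite_seqP Tset).1 finT.
set M := topncl mul inv one Tset.
have cM : closed M := @topncl_closed _ mul inv one Tset.
have nM : nsg mul inv one M := @topncl_nsg _ mul inv one Tset.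
have c1 : closed [set one] := @accessible_closed_set1 _ (hausdorff_accessible Hhaus) one.
have n1 := nsg1 Hg.
have KM : [set one] `<=` M by move=> y ->; apply: (sg1 (nsg_sg nM)).
have GM : forall g, g \in tS -> M g.
  by move=> g hg; apply: topncl_sub; rewrite htS.
have NM := NN_M cM nM KM GM.
have hE : Engel mul inv tS [set one].
  move=> g hg x; have := hEng g; rewrite htS => /(_ hg) /(_ x) [n hn]; by exists n.
have hC : lcs mul inv one c `<=` Cen mul inv (NN mul inv one tS [set one]) [set one].
  move=> y hy m hm; apply: (comm_commute Hg); apply: habel; [exact: NM | exact: hc].
have [k hk] := (@Pall _ mul inv one Hg Hmc Hic M cM nM habel S hS sS hsS c [set one] tS c1 n1 KM GM hE hC).
exists (c + k); apply: (lcs_zeta Hg n1) => y hy; apply: hk.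
move: (hc y hy); apply: topncl_mono => z hz; left; by rewrite -htS.
Qed.
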